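(* For any type $A$, the type $A^{\circ}$ of isolated points of $A$ is discrete, and hence a set.
   Context: Homotopy Type Theory. A point $a:A$ is isolated if $a=b$ is decidable for every $b:A$, i.e. $\mathrm{isIsolated}(a):=\prod_{b:A}\mathrm{Dec}(a=b)$, and $A^{\circ}:=\sum_{a:A}\mathrm{isIsolated}(a)$. A type is discrete if equality on it is decidable. *)

(* Defs.v *)
Definition Dec (P : Type) : Type := (P + (P -> False))%type.

Definition isIsolated {A : Type} (a : A) : Type := forall b : A, Dec (a = b).

Definition isolatedPoints (A : Type) : Type := { a : A & isIsolated a }.

Definition isDiscrete (A : Type) : Type := forall x y : A, Dec (x = y).

Definition isSet (A : Type) : Prop := forall (x y : A) (p q : x = y), p = q.

(* Main.v *)
Require Import Defs.
From Stdlib Require Import FunctionalExtensionality.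

Lemma iso_paths {A : Type} (a : A) (ia : isIsolated a) :
  forall (b : A) (p q : a = b), p = q.
Proof.
  set (f := fun b (p : a = b) =>
    match ia b with inl r => r | inr n => match n p with end end).
  assert (fc : forall b (p q : a = b), f b p = f b q).
  { intros b p q; unfold f; destruct (ia b) as [r|n]; [reflexivity|destruct (n p)]. }
  assert (key : forall b (p : a = b), p = eq_trans (eq_sym (f a eq_refl)) (f b p)).
  { intros b p; destruct p; destruct (f a eq_refl); reflexivity. }
  intros b p q; rewrite (key b p), (key b q), (fc b p q); reflexivity.
Qed.

Lemma dec_prop {A : Type} (a b : A) (ia : isIsolated a) (d e : Dec (a = b)) : d = e.
Proof.
  destruct d as [p|n], e as [q|m].
  - f_equal; apply iso_paths; exact ia.
  - destruct (m p).
  - destruct (n q).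
  - f_equal; apply functional_extensionality; intros x; destruct (n x).
Qed.

Lemma isolated_prop {A : Type} (a : A) (i j : isIsolated a) : i = j.
Proof.
  apply functional_extensionality_dep; intros b; apply dec_prop; exact i.
Qed.

Theorem proposition2p4 (A : Type) :
  isDiscrete (isolatedPoints A) * isSet (isolatedPoints A).
Proof.
  assert (D : isDiscrete (isolatedPoints A)).
  { intros [a ia] [b ib]. destruct (ia b) as [p|n].
    - left. destruct p. f_equal. apply isolated_prop.
    - right. intros H. apply n. exact (f_equal (@projT1 _ _) H). }
  split; [exact D|].
  intros x y p q. apply (iso_paths x (D x)).
Qed.
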